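(* Let $\nabla$ be an ES basic fusion operator and $\Phi\mapsto\succeq_\Phi$ the unique basic assignment with $[\![B(\nabla(\Phi,E))]\!]=\max([\![B(E)]\!],\succeq_\Phi)$ for all $\Phi,E$. Then: (i) $\nabla$ satisfies (ESF5) iff the assignment satisfies Property 1; (ii) $\nabla$ satisfies (ESF6) iff it satisfies Property 2; (iii) $\nabla$ satisfies (ESF7) iff it satisfies Property 3; (iv) $\nabla$ satisfies (ESF8) iff it satisfies Property 4; (v) $\nabla$ satisfies (ESF8W) iff it satisfies Property 4'.
   Context: Setting: an epistemic space $(\mathcal E,B,\mathcal L_{\mathcal P})$ ($\mathcal E$ nonempty, $B:\mathcal E\to\mathcal L_{\mathcal P}$ with image modulo equivalence exactly the consistent formulas over the finite variable set $\mathcal P$; $\mathcal W_{\mathcal P}$ the valuations, $[\![\phi]\!]$ models of $\phi$); agents form a well-ordered set $\mathcal S$; a society is a nonempty finite $N\subseteq\mathcal S$; an $N$-profile is $\Phi:N\to\mathcal E$ with $E_i=\Phi(i)$ (for $N=\{i\}$ identified with $E_i$); $\Phi\upharpoonright_M$ is restriction to nonempty $M\subseteq N$; a partition $\{N_1,N_2\}$ of $N$ consists of two nonempty disjoint sets with union $N$. An ES combination operator maps (profile, epistemic state) to an epistemic state; an ES basic fusion operator satisfies (ESF1) $B(\nabla(\Phi,E))\vdash B(E)$; (ESF2) equivalent profiles (same length, same entries in increasing order of agents) and equivalent $B(E)\equiv B(E')$ give equivalent $B(\nabla(\cdot,\cdot))$; (ESF3) if $B(E)\equiv B(E')\wedge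 B(E'')$ then $B(\nabla(\Phi,E'))\wedge B(E'')\vdash B(\nabla(\Phi,E))$; (ESF4) under the same hypothesis, if moreover $B(\nabla(\Phi,E'))\wedge B(E'')\nvdash\bot$ then $B(\nabla(\Phi,E))\vdash B(\nabla(\Phi,E'))\wedge B(E'')$. Postulates (for agents $j,k$, society $N$, partition $\{N_1,N_2\}$, $N$-profile $\Phi$, $E\in\mathcal E$): (ESF5) if $E_j\ne E_k$ there is $E'$ with $B(\nabla(E_j,E'))\not\equiv B(\nabla(E_k,E'))$; (ESF6) if $\bigwedge_{i\in N}B(E_i)\wedge B(E)\nvdash\bot$ then $B(\nabla(\Phi,E))\equiv\bigwedge_{i\in N}B(E_i)\wedge B(E)$; (ESF7) $B(\nabla(\Phi\upharpoonright_{N_1},E))\wedge B(\nabla(\Phi\upharpoonright_{N_2},E))\vdash B(\nabla(\Phi,E))$; (ESF8) if $B(\nabla(\Phi\upharpoonright_{N_1},E))\wedge B(\nabla(\Phi\upharpoonright_{N_2},E))\nvdash\bot$ then $B(\nabla(\Phi,E))\vdash B(\nabla(\Phi\upharpoonright_{N_1},E))\wedge B(\nabla(\Phi\upharpoonright_{N_2},E))$; (ESF8W) same hypothesis, conclusion $B(\nabla(\Phi,E))\vdash B(\nabla(\Phi\upharpoonright_{N_1},E))\vee B(\nabla(\Phi\upharpoonright_{N_2},E))$. Properties of an assignment $\Phi\mapsto\succeq_\Phi$ (total preorders on $\mathcal W_{\mathcal P}$, $\succ$ strict part), for all such data and interpretations $w,w'$: (1) if $E_j\ne E_k$ then $\succeq_{E_j}\ne\succeq_{E_k}$;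 (2) if $\bigwedge_{i\in N}B(E_i)\nvdash\bot$ then $[\![\bigwedge_{i\in N}B(E_i)]\!]=\max(\succeq_\Phi)$ (the set of $\succeq_\Phi$-maximal valuations); (3) if $w\succeq_{\Phi\upharpoonright_{N_1}}w'$ and $w\succeq_{\Phi\upharpoonright_{N_2}}w'$ then $w\succeq_\Phi w'$; (4) if $w\succeq_{\Phi\upharpoonright_{N_1}}w'$ and $w\succ_{\Phi\upharpoonright_{N_2}}w'$ then $w\succ_\Phi w'$; (4') if $w\succ_{\Phi\upharpoonright_{N_1}}w'$ and $w\succ_{\Phi\upharpoonright_{N_2}}w'$ then $w\succ_\Phi w'$. $\max(C,\succeq)=\{c\in C: c\succeq x\ \forall x\in C\}$. *)

(* Defs.v *)
From HB Require Import structures.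
From mathcomp Require Import all_boot all_order.
Set Implicit Arguments. Unset Strict Implicit. Unset Printing Implicit Defensive.
Import Order.TTheory.

Inductive form (P : Type) : Type :=
| FVar of P
| FBot
| FTop
| FNeg of form P
| FAnd of form P & form P
| FOr of form P & form P
| FImp of form P & form P.
Arguments FBot {P}. Arguments FTop {P}.

Definition valuation (P : finType) := {ffun P -> bool}.

Fixpoint sat (P : finType) (w : valuation P) (f : form P) : bool :=
  match f with
  | FVar p => w p
  | FBot => false
  | FTop => true
  | FNeg g => ~~ sat w g
  | FAnd g h => sat w g && sat w h
  | FOr g h => sat w g || sat w h
  | FImp g h => sat w g ==> sat w h
  end.

Definition models (P : finType) (f : form P) : pred (valuation P) := fun w => sat w f.
Definition entails (P : finType) (f g : form P) : Prop := forall w, sat w f -> sat w g.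
Definition fequiv (P : finType) (f g : form P) : Prop := entails f g /\ entails g f.
Definition consistent (P : finType) (f : form P) : Prop := ~ entails f FBot.
Definition bigAnd (P : finType) (s : seq (form P)) : form P := foldr (@FAnd P) FTop s.

Definition epistemic_space (P : finType) (E : Type) (B : E -> form P) : Prop :=
  inhabited E /\
  (forall e, consistent (B e)) /\
  (forall f, consistent f -> exists e, fequiv (B e) f).

(* A profile Phi : N -> E is represented by its graph, listed in strictly
   increasing order of agents; N is the list of its first components. *)
Definition is_profile d (S : orderType d) (E : Type) (Phi : seq (S * E)) : Prop :=
  Phi <> [::] /\ sorted (fun p q : S * E => (p.1 < q.1)%O) Phi.

Definition society d (S : orderType d) (E : Type) (Phi : seq (S * E)) : seq S :=
  map fst Phi.

Definition states d (S : orderType d) (E : Type) (Phi : seq (S * E)) : seq E :=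
  map snd Phi.

Definition restr d (S : orderType d) (E : Type) (Phi : seq (S * E)) (M : seq S)
  : seq (S * E) := [seq p <- Phi | p.1 \in M].

Definition is_partition d (S : orderType d) (N N1 N2 : seq S) : Prop :=
  [/\ N1 != [::], N2 != [::],
      (forall i, (i \in N) = (i \in N1) || (i \in N2)) &
      (forall i, i \in N1 -> i \notin N2)].

Definition prof_equiv d (S : orderType d) (E : Type) (Phi Phi' : seq (S * E)) : Prop :=
  size Phi = size Phi' /\ states Phi = states Phi'.

Definition conjB (P : finType) d (S : orderType d) (E : Type) (B : E -> form P)
  (Phi : seq (S * E)) : form P := bigAnd (map B (states Phi)).

Section Fusion.
Variables (P : finType) (E : Type) (d : Order.disp_t) (S : orderType d).
Variables (B : E -> form P) (nabla : seq (S * E) -> E -> E).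

Definition ESF1 := forall Phi e, is_profile Phi -> entails (B (nabla Phi e)) (B e).
Definition ESF2 := forall Phi Phi' e e', is_profile Phi -> is_profile Phi' ->
  prof_equiv Phi Phi' -> fequiv (B e) (B e') ->
  fequiv (B (nabla Phi e)) (B (nabla Phi' e')).
Definition ESF3 := forall Phi e e' e'', is_profile Phi ->
  fequiv (B e) (FAnd (B e') (B e'')) ->
  entails (FAnd (B (nabla Phi e')) (B e'')) (B (nabla Phi e)).
Definition ESF4 := forall Phi e e' e'', is_profile Phi ->
  fequiv (B e) (FAnd (B e') (B e'')) ->
  consistent (FAnd (B (nabla Phi e')) (B e'')) ->
  entails (B (nabla Phi e)) (FAnd (B (nabla Phi e')) (B e'')).

Definition ES_basic_fusion := [/\ ESF1, ESF2, ESF3 & ESF4].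

Definition ESF5 := forall (j k : S) (ej ek : E), ej <> ek ->
  exists e', ~ fequiv (B (nabla [:: (j, ej)] e')) (B (nabla [:: (k, ek)] e')).
Definition ESF6 := forall Phi e, is_profile Phi ->
  consistent (FAnd (conjB B Phi) (B e)) ->
  fequiv (B (nabla Phi e)) (FAnd (conjB B Phi) (B e)).
Definition ESF7 := forall Phi N1 N2 e, is_profile Phi ->
  is_partition (society Phi) N1 N2 ->
  entails (FAnd (B (nabla (restr Phi N1) e)) (B (nabla (restr Phi N2) e)))
          (B (nabla Phi e)).
Definition ESF8 := forall Phi N1 N2 e, is_profile Phi ->
  is_partition (society Phi) N1 N2 ->
  consistent (FAnd (B (nabla (restr Phi N1) e)) (B (nabla (restr Phi N2) e))) ->
  entails (B (nabla Phi e))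
          (FAnd (B (nabla (restr Phi N1) e)) (B (nabla (restr Phi N2) e))).
Definition ESF8W := forall Phi N1 N2 e, is_profile Phi ->
  is_partition (society Phi) N1 N2 ->
  consistent (FAnd (B (nabla (restr Phi N1) e)) (B (nabla (restr Phi N2) e))) ->
  entails (B (nabla Phi e))
          (FOr (B (nabla (restr Phi N1) e)) (B (nabla (restr Phi N2) e))).
End Fusion.

Definition total_preorder (T : Type) (R : rel T) : Prop :=
  (forall x y, R x y || R y x) /\ transitive R.

Definition strict (T : Type) (R : rel T) : rel T := fun x y => R x y && ~~ R y x.

Definition maxset (T : finType) (C : pred T) (R : rel T) : pred T :=
  fun c => C c && [forall x, C x ==> R c x].

Section Assign.
Variables (P : finType) (E : Type) (d : Order.disp_t) (S : orderType d).
Variables (B : E -> form P) (pre : seq (S * E) -> rel (valuation P)).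

Definition Prop1 := forall (j k : S) (ej ek : E), ej <> ek ->
  pre [:: (j, ej)] <> pre [:: (k, ek)].
Definition Prop2 := forall Phi, is_profile Phi -> consistent (conjB B Phi) ->
  models (conjB B Phi) =i maxset predT (pre Phi).
Definition Prop3 := forall Phi N1 N2 w w', is_profile Phi ->
  is_partition (society Phi) N1 N2 ->
  pre (restr Phi N1) w w' -> pre (restr Phi N2) w w' -> pre Phi w w'.
Definition Prop4 := forall Phi N1 N2 w w', is_profile Phi ->
  is_partition (society Phi) N1 N2 ->
  pre (restr Phi N1) w w' -> strict (pre (restr Phi N2)) w w' -> strict (pre Phi) w w'.
Definition Prop4' := forall Phi N1 N2 w w', is_profile Phi ->
  is_partition (society Phi) N1 N2 ->
  strict (pre (restr Phi N1)) w w' -> strict (pre (restr Phi N2)) w w' ->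
  strict (pre Phi) w w'.
End Assign.

Definition represents (P : finType) (E : Type) d (S : orderType d)
  (B : E -> form P) (nabla : seq (S * E) -> E -> E)
  (pre : seq (S * E) -> rel (valuation P)) : Prop :=
  (forall Phi, is_profile Phi -> total_preorder (pre Phi)) /\
  (forall Phi e, is_profile Phi ->
     models (B (nabla Phi e)) =i maxset (models (B e)) (pre Phi)).

(* Main.v *)
From Pilot Require Import Defs.
From mathcomp Require Import all_boot all_order.
From Stdlib Require Import Classical FunctionalExtensionality.
Import Order.TTheory.
Import Pilot.Defs.
Set Implicit Arguments. Unset Strict Implicit.

Section Aux.
Variables (P : finType) (E : Type) (d : Order.disp_t) (S : orderType d).
Variables (B : E -> form P) (nabla : seq (S * E) -> E -> E)
  (pre : seq (S * E) -> rel (valuation P)).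
Hypothesis hES : epistemic_space B.
Hypothesis hrep : represents B nabla pre.

Lemma witness (f : form P) : consistent f -> exists w, sat w f.
Proof. move=> hc; apply: NNPP => hn; apply: hc => w hw; exfalso; apply: hn; by exists w. Qed.

Lemma state_of (f : form P) (w0 : valuation P) : sat w0 f -> exists e, forall v, sat v (B e) = sat v f.
Proof.
move=> h0; case: hES => _ [_ H]; have [e [h1 h2]] : exists e, fequiv (B e) f by apply: H => hb; move: (hb w0 h0).
exists e => v; apply/idP/idP; [exact: h1|exact: h2].
Qed.

Definition lit (w : valuation P) (p : P) : form P := if w p then FVar p else FNeg (FVar p).
Definition chi w := bigAnd (map (lit w) (enum P)).

Lemma sat_chi v w : sat v (chi w) = (v == w).
Proof.
have ->: sat v (chi w) = all (fun p => v p == w p) (enum P).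
  rewrite /chi /bigAnd; elim: (enum P) => //= p s ->.
  by rewrite /lit; case: (w p) => /=; case: (v p).
apply/allP/eqP => [h|->]; last by move=> p _.
apply/ffunP => p; apply/eqP; apply: h; by rewrite mem_enum.
Qed.

Lemma pair_state w w' : exists e, forall v, sat v (B e) = (v == w) || (v == w').
Proof.
have [e He] := @state_of (FOr (chi w) (chi w')) w ltac:(by rewrite /= sat_chi eqxx).
by exists e => v; rewrite He /= !sat_chi.
Qed.

Lemma top_state : exists e, forall v, sat v (B e).
Proof.
have [e He] := @state_of FTop [ffun=> true] isT.
by exists e => v; rewrite He.
Qed.

Lemma maxsetP (C : pred (valuation P)) (R : rel (valuation P)) c :
  reflect (C c /\ forall x, C x -> R c x) (maxset C R c).
Proof.
rewrite /maxset; apply: (iffP andP) => [[hc /forallP h]|[hc h]]; split => //.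
  by move=> x hx; move/implyP: (h x); apply.
by apply/forallP => x; apply/implyP; apply: h.
Qed.

Lemma tp {Phi} : is_profile Phi -> total_preorder (pre Phi).
Proof. exact: hrep.1. Qed.

Lemma refl Phi w : is_profile Phi -> pre Phi w w.
Proof. by move=> hP; have := (tp hP).1 w w; rewrite orbb. Qed.

Lemma repE Phi e v : is_profile Phi ->
  sat v (B (nabla Phi e)) = maxset (models (B e)) (pre Phi) v.
Proof. move=> hP; exact: (hrep.2 Phi e hP v). Qed.

Lemma repP {Phi e v} : is_profile Phi ->
  reflect (sat v (B e) /\ forall x, sat x (B e) -> pre Phi v x) (sat v (B (nabla Phi e))).
Proof. move=> hP; rewrite repE //; exact: maxsetP. Qed.

Lemma pairE Phi e w w' : is_profile Phi ->
  (forall v, sat v (B e) = (v == w) || (v == w')) ->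
  sat w (B (nabla Phi e)) = pre Phi w w' /\ sat w' (B (nabla Phi e)) = pre Phi w' w.
Proof.
move=> hP He; split.
  apply/(repP hP)/idP => [[_ h]|h]; first by apply: h; rewrite He eqxx orbT.
  split; first by rewrite He eqxx.
  by move=> x; rewrite He => /orP [/eqP->|/eqP->] //; apply: refl.
apply/(repP hP)/idP => [[_ h]|h]; first by apply: h; rewrite He eqxx.
split; first by rewrite He eqxx orbT.
by move=> x; rewrite He => /orP [/eqP->|/eqP->] //; apply: refl.
Qed.

Lemma prof1 (j : S) (ej : E) : is_profile [:: (j, ej)].
Proof. by split. Qed.

Lemma restr_prof (Phi : seq (S * E)) N1 N2 : is_profile Phi ->
  is_partition (society Phi) N1 N2 -> is_profile (restr Phi N1).
Proof.
case=> hne hs [h1 _ hN _]; split.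
  case: N1 h1 hN => // i N1' _ hN.
  have: i \in society Phi by rewrite hN mem_head.
  move=> hi hr.
  have: i \in [seq j <- society Phi | j \in i :: N1'] by rewrite mem_filter mem_head hi.
  by rewrite /society filter_map -/(restr Phi (i :: N1')) hr.
apply: sorted_filter => //; move=> x y z; exact: lt_trans.
Qed.

Lemma part_swap (N N1 N2 : seq S) : is_partition N N1 N2 -> is_partition N N2 N1.
Proof.
case=> h1 h2 hN hd; split => // [i|i hi]; first by rewrite orbC.
by apply/negP => hi1; move: (hd i hi1); rewrite hi.
Qed.

Lemma lift_max Phi e c0 v : is_profile Phi -> sat c0 (B (nabla Phi e)) ->
  sat v (B e) -> pre Phi v c0 -> sat v (B (nabla Phi e)).
Proof.
move=> hP /(repP hP) [hc0 H0] hv hvc0; apply/(repP hP); split => // x hx.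
exact: (tp hP).2 _ _ _ hvc0 (H0 x hx).
Qed.

Lemma aux4 Phi N1 N2 e c0 v : is_profile Phi -> is_partition (society Phi) N1 N2 ->
  Prop4 pre ->
  sat c0 (B (nabla (restr Phi N1) e)) -> sat c0 (B (nabla (restr Phi N2) e)) ->
  sat v (B (nabla Phi e)) -> sat v (B (nabla (restr Phi N2) e)).
Proof.
move=> hP hpart h4 hc1 hc2 hv.
have hP1 := restr_prof hP hpart; have hP2 := restr_prof hP (part_swap hpart).
have [hve Hv] := elimT (repP hP) hv.
case E2: (pre (restr Phi N2) v c0); first exact: lift_max hc2 hve E2.
have [_ H1] := elimT (repP hP1) hc1. have [hc0 H2] := elimT (repP hP2) hc2.
have := h4 Phi N1 N2 c0 v hP hpart (H1 v hve).
rewrite /strict (H2 v hve) E2 /= => /(_ isT) /andP [_].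
by rewrite Hv.
Qed.

End Aux.

Theorem mainTheorem3 (P : finType) (E : Type) (d : Order.disp_t) (S : orderType d)
  (B : E -> form P) (nabla : seq (S * E) -> E -> E)
  (pre : seq (S * E) -> rel (valuation P)) :
  well_founded (fun x y : S => (x < y)%O) ->
  epistemic_space B ->
  ES_basic_fusion B nabla ->
  represents B nabla pre ->
  [/\ ESF5 B nabla <-> Prop1 pre,
      ESF6 B nabla <-> Prop2 B pre,
      ESF7 B nabla <-> Prop3 pre,
      ESF8 B nabla <-> Prop4 pre &
      ESF8W B nabla <-> Prop4' pre].
Proof.
move=> _ hES _ hrep; split.
- split.
  + move=> h5 j k ej ek hne heq; have [e' H] := h5 j k ej ek hne.
    by apply: H; split => v; rewrite !(repE hrep) ?heq //; apply: prof1.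
  + move=> h1 j k ej ek hne; apply: NNPP => hn.
    have hall : forall e', fequiv (B (nabla [:: (j, ej)] e')) (B (nabla [:: (k, ek)] e')).
      by move=> e'; apply: NNPP => hx; apply: hn; exists e'.
    apply: (h1 j k ej ek hne).
    apply: functional_extensionality => w; apply: functional_extensionality => w'.
    have [e He] := pair_state hES w w'.
    have [a _] := pairE hrep (prof1 j ej) He; have [b _] := pairE hrep (prof1 k ek) He.
    rewrite -a -b; have [h h'] := hall e; apply/idP/idP; [exact: h|exact: h'].
- split.
  + move=> h6 Phi hP hc v; have [e0 He0] := top_state hES.
    have hc' : consistent (FAnd (conjB B Phi) (B e0)).
      by move=> hb; apply: hc => w hw; apply: hb; rewrite /= hw He0.
    have [h h'] := h6 Phi e0 hP hc'.
    change (sat v (conjB B Phi) = maxset predT (pre Phi) v).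
    have -> : maxset predT (pre Phi) v = sat v (B (nabla Phi e0)).
      rewrite (repE hrep) //; apply/maxsetP/maxsetP => [[_ H]|[_ H]]; split => //.
      - exact: (He0 v).
      - by move=> x _; apply: H.
      - by move=> x _; apply: H; exact: (He0 x).
    apply/idP/idP => [hv|hv]; first by apply: h'; rewrite /= hv He0.
    by have := h v hv => /= /andP [].
  + move=> h2 Phi e hP hc.
    have [w0 /= /andP [hw0c hw0e]] := witness hc.
    have hc' : consistent (conjB B Phi) by move=> hb; move: (hb w0 hw0c).
    have M := h2 Phi hP hc'.
    have MP : forall v, sat v (conjB B Phi) <-> forall x, pre Phi v x.
      move=> v; have Mv : sat v (conjB B Phi) = maxset predT (pre Phi) v := M v.
      rewrite Mv; split => [/maxsetP [_ H] x|H]; first exact: H.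
      by apply/maxsetP; split.
    split => v.
    * move/(repP hrep hP) => [hv H] /=; rewrite hv andbT; apply/MP => x.
      exact: (tp hrep hP).2 _ _ _ (H w0 hw0e) (proj1 (MP w0) hw0c x).
    * move=> /= /andP [hvc hve]; apply/(repP hrep hP); split => // x _.
      exact: (proj1 (MP v) hvc x).
- split.
  + move=> h7 Phi N1 N2 w w' hP hpart h1 h2.
    have [e He] := pair_state hES w w'.
    have hP1 := restr_prof hP hpart; have hP2 := restr_prof hP (part_swap hpart).
    have [a1 _] := pairE hrep hP1 He; have [a2 _] := pairE hrep hP2 He.
    have [a _] := pairE hrep hP He.
    rewrite -a; apply: (h7 Phi N1 N2 e hP hpart); by rewrite /= a1 a2 h1 h2.
  + move=> h3 Phi N1 N2 e hP hpart v /= /andP [].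
    have hP1 := restr_prof hP hpart; have hP2 := restr_prof hP (part_swap hpart).
    move=> /(repP hrep hP1) [hv H1] /(repP hrep hP2) [_ H2].
    apply/(repP hrep hP); split => // x hx.
    exact: h3 hpart (H1 x hx) (H2 x hx).
- split.
  + move=> h8 Phi N1 N2 w w' hP hpart h1 /andP [h2 h2n].
    have [e He] := pair_state hES w w'.
    have hP1 := restr_prof hP hpart; have hP2 := restr_prof hP (part_swap hpart).
    have [a1 b1] := pairE hrep hP1 He; have [a2 b2] := pairE hrep hP2 He.
    have [a b] := pairE hrep hP He.
    have hc : consistent (FAnd (B (nabla (restr Phi N1) e)) (B (nabla (restr Phi N2) e))).
      by move=> hb; move: (hb w); rewrite /= a1 a2 h1 h2 => /(_ isT).
    have H := h8 Phi N1 N2 e hP hpart hc.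
    have nb : ~~ pre Phi w' w.
      apply/negP => hb; have := H w'; rewrite /= b b2 (negbTE h2n) andbF hb.
      by move/(_ isT).
    apply/andP; split => //; have := (tp hrep hP).1 w w'; by rewrite (negbTE nb) orbF.
  + move=> h4 Phi N1 N2 e hP hpart hc v hv.
    have [c0 /= /andP [hc1 hc2]] := witness hc.
    rewrite /=; apply/andP; split.
      exact: (aux4 hrep hP (part_swap hpart) h4 hc2 hc1 hv).
    exact: (aux4 hrep hP hpart h4 hc1 hc2 hv).
- split.
  + move=> h8 Phi N1 N2 w w' hP hpart /andP [h1 h1n] /andP [h2 h2n].
    have [e He] := pair_state hES w w'.
    have hP1 := restr_prof hP hpart; have hP2 := restr_prof hP (part_swap hpart).
    have [a1 b1] := pairE hrep hP1 He; have [a2 b2] := pairE hrep hP2 He.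
    have [a b] := pairE hrep hP He.
    have hc : consistent (FAnd (B (nabla (restr Phi N1) e)) (B (nabla (restr Phi N2) e))).
      by move=> hb; move: (hb w); rewrite /= a1 a2 h1 h2 => /(_ isT).
    have H := h8 Phi N1 N2 e hP hpart hc.
    have nb : ~~ pre Phi w' w.
      apply/negP => hb; have := H w'; rewrite /= b b1 b2 (negbTE h2n) (negbTE h1n) hb.
      by move/(_ isT).
    apply/andP; split => //; have := (tp hrep hP).1 w w'; by rewrite (negbTE nb) orbF.
  + move=> h4 Phi N1 N2 e hP hpart hc v hv.
    have [c0 /= /andP [hc1 hc2]] := witness hc.
    have hP1 := restr_prof hP hpart; have hP2 := restr_prof hP (part_swap hpart).
    have [hve Hv] := elimT (repP hrep hP) hv.
    rewrite /=.
    case E1: (pre (restr Phi N1) v c0); first by rewrite (lift_max hrep hP1 hc1 hve E1).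
    case E2: (pre (restr Phi N2) v c0); first by rewrite (lift_max hrep hP2 hc2 hve E2) orbT.
    have [hc0 H1] := elimT (repP hrep hP1) hc1. have [_ H2] := elimT (repP hrep hP2) hc2.
    have := h4 Phi N1 N2 c0 v hP hpart.
    rewrite /strict (H1 v hve) (H2 v hve) E1 E2 /= => /(_ isT isT) /andP [_].
    by rewrite (Hv c0 hc0).
Qed.
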